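(* Let $K$ be a field of characteristic zero, $K'\subseteq K$ a subfield, $R=K[x_1,\ldots,x_n]$ and $R'=K'[x_1,\ldots,x_n]$ (standard grading). Let $J\subset R'$ be a graded ideal with $R'/J$ Artinian and having the strong Lefschetz property. Let $\{\xi_{ij}: 1\le i\le m,\ 1\le j\le n\}\subset K$ be algebraically independent over $K'$, and put $L_i=\xi_{i1}x_1+\cdots+\xi_{in}x_n\in R$ for $1\le i\le m$. Then for all positive integers $d_1,\ldots,d_m$, the algebra $$A=R/\big(JR : L_1^{d_1}L_2^{d_2}\cdots L_m^{d_m}\big)$$ has the strong Lefschetz property.
   Context: For an ideal $I$ and element $f$, $I:f=\{g : gf\in I\}$. A standard graded Artinian $k$-algebra ($k$ a field) is $A=\bigoplus_{i=0}^c A_i$ with $A_0=k$, generated by $A_1$, finite-dimensional, and $A_c\neq 0$. $A$ has the strong Lefschetz property (SLP) if there exists a linear form $z\in A_1$ such that the multiplication map $\times z^d: A_i\to A_{i+d}$ has full rank (i.e. is injective or surjective) for all $1\le d\le c-1$ and $0\le i\le c-d$; such $z$ is called a strong Lefschetz (SL) element. *)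

(* Defs.v *)
From HB Require Import structures.
From mathcomp Require Import all_boot all_order all_algebra.
From mathcomp Require Import mpoly.
Set Implicit Arguments.
Unset Strict Implicit.
Unset Printing Implicit Defensive.
Import GRing.Theory.
Local Open Scope ring_scope.

Definition is_ideal (n : nat) (F : comNzRingType) (I : {mpoly F[n]} -> Prop) : Prop :=
  [/\ I 0,
      (forall p q, I p -> I q -> I (p + q)) &
      (forall r p, I p -> I (r * p))].

Definition is_graded (n : nat) (F : comNzRingType) (I : {mpoly F[n]} -> Prop) : Prop :=
  forall p (d : nat), I p -> I (pihomog mdeg d p).

Definition ext_ideal (n : nat) (K' K : fieldType) (f : {rmorphism K' -> K})
  (J : {mpoly K'[n]} -> Prop) : {mpoly K[n]} -> Prop :=
  fun p => exists s : seq ({mpoly K[n]} * {mpoly K'[n]}),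
    (forall x, x \in s -> J x.2) /\
    p = \sum_(x <- s) x.1 * map_mpoly f x.2.

Definition colon (n : nat) (F : comNzRingType) (I : {mpoly F[n]} -> Prop)
  (g : {mpoly F[n]}) : {mpoly F[n]} -> Prop :=
  fun q => I (q * g).

(* For a graded ideal I, the i-th graded piece of A = F[x]/I is
   F[x]_i / I_i.  A_i = 0 iff every homogeneous form of degree i is in I. *)
Definition piece_zero (n : nat) (F : fieldType) (I : {mpoly F[n]} -> Prop)
  (i : nat) : Prop :=
  forall p : {mpoly F[n]}, p \is i.-homog -> I p.

Definition artinian (n : nat) (F : fieldType) (I : {mpoly F[n]} -> Prop) : Prop :=
  exists N : nat, forall i, (N <= i)%N -> piece_zero I i.

(* Multiplication by z^d : A_i -> A_(i+d) has full rank (injective or surjective). *)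
Definition mult_full_rank (n : nat) (F : fieldType) (I : {mpoly F[n]} -> Prop)
  (z : {mpoly F[n]}) (d i : nat) : Prop :=
  (forall p : {mpoly F[n]}, p \is i.-homog -> I (z ^+ d * p) -> I p)
  \/
  (forall g : {mpoly F[n]}, g \is (i + d)%N.-homog ->
     exists p : {mpoly F[n]}, p \is i.-homog /\ I (g - z ^+ d * p)).

(* A = F[x]/I (I graded) is Artinian and has the strong Lefschetz property:
   there is a linear form z such that, c being the socle degree of A
   (A_c <> 0, A_(c+1) = 0), x z^d : A_i -> A_(i+d) has full rank for all
   1 <= d <= c-1 and 0 <= i <= c-d.  (For A = 0 the condition is vacuous.) *)
Definition has_SLP (n : nat) (F : fieldType) (I : {mpoly F[n]} -> Prop) : Prop :=
  artinian I /\
  exists z : {mpoly F[n]}, z \is 1%N.-homog /\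
    forall c d i : nat, ~ piece_zero I c -> piece_zero I c.+1 ->
      (1 <= d)%N -> (d <= c - 1)%N -> (i <= c - d)%N ->
      mult_full_rank I z d i.

Definition alg_indep (K' K : fieldType) (f : {rmorphism K' -> K}) (m n : nat)
  (xi : 'M[K]_(m, n)) : Prop :=
  forall P : {mpoly K'[m * n]},
    (map_mpoly f P).@[fun k => mxvec xi 0 k] = 0 -> P = 0.

Definition lin_form (K : fieldType) (m n : nat) (xi : 'M[K]_(m, n)) (i : 'I_m)
  : {mpoly K[n]} := \sum_(j < n) xi i j *: 'X_j.

(* Main.v *)
Require Import Defs.
From HB Require Import structures.
From mathcomp Require Import all_boot all_order all_algebra.
From mathcomp Require Import mpoly.
From Stdlib Require Import Classical ClassicalEpsilon.
From mathcomp Require Import zify.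
Set Implicit Arguments.
Unset Strict Implicit.
Unset Printing Implicit Defensive.
Import GRing.Theory.
Local Open Scope ring_scope.

Definition mons (n k : nat) : seq 'X_{1..n} :=
  [seq val m | m <- enum [pred m : 'X_{1..n < k.+1} | mdeg (val m) == k]].

Definition Msz n k := size (mons n k).

Definition mon n k (t : 'I_(Msz n k)) : 'X_{1..n} := nth 0%MM (mons n k) t.

Lemma mons_uniq n k : uniq (mons n k).
Proof. by rewrite map_inj_uniq ?enum_uniq //; apply: val_inj. Qed.

Lemma mem_mons n k (m : 'X_{1..n}) : (m \in mons n k) = (mdeg m == k).
Proof.
apply/mapP/idP => [[m' ] | hm].
  by rewrite mem_enum inE => hm ->.
have hb : (mdeg m < k.+1)%N by rewrite (eqP hm).
by exists (BMultinom hb); rewrite ?mem_enum ?inE.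
Qed.

Lemma mdeg_mon n k t : mdeg (@mon n k t) = k.
Proof. by apply/eqP; rewrite -mem_mons mem_nth. Qed.

Lemma mon_inj n k : injective (@mon n k).
Proof.
move=> s t h; apply/val_inj/eqP; rewrite -(nth_uniq 0%MM _ _ (mons_uniq n k)) //.
- by apply/eqP; exact: h.
- exact: ltn_ord.
- exact: ltn_ord.
Qed.

Lemma mon_surj n k (m : 'X_{1..n}) : mdeg m = k -> exists t, @mon n k t = m.
Proof.
move=> hm; have hin : m \in mons n k by rewrite mem_mons hm.
have hi : (index m (mons n k) < Msz n k)%N by rewrite index_mem.
by exists (Ordinal hi); rewrite /mon /= nth_index.
Qed.

Definition vec (R : nzRingType) n k (p : {mpoly R[n]}) : 'rV[R]_(Msz n k) :=
  \row_t p@_(mon t).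
Definition pol (R : nzRingType) n k (v : 'rV[R]_(Msz n k)) : {mpoly R[n]} :=
  \sum_t v 0 t *: 'X_[mon t].

Lemma mcoeff_pol (R : nzRingType) n k (v : 'rV[R]_(Msz n k)) m :
  (pol v)@_m = \sum_t v 0 t * (mon t == m)%:R.
Proof. by rewrite /pol raddf_sum; apply: eq_bigr => t _ /=; rewrite mcoeffZ mcoeffX. Qed.

Lemma mcoeff_pol_mon (R : nzRingType) n k (v : 'rV[R]_(Msz n k)) t :
  (pol v)@_(mon t) = v 0 t.
Proof.
rewrite mcoeff_pol (bigD1 t) //= eqxx mulr1 big1 ?addr0 // => s hs.
by rewrite (inj_eq (@mon_inj n k)) (negbTE hs) mulr0.
Qed.

Lemma mcoeff_pol_out (R : nzRingType) n k (v : 'rV[R]_(Msz n k)) m :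
  mdeg m != k -> (pol v)@_m = 0.
Proof.
move=> hm; rewrite mcoeff_pol big1 // => t _.
case: eqP => [h|]; last by rewrite mulr0.
by move: hm; rewrite -h mdeg_mon eqxx.
Qed.

Lemma vec_pol (R : nzRingType) n k (v : 'rV[R]_(Msz n k)) : vec k (pol v) = v.
Proof. by apply/rowP => t; rewrite mxE mcoeff_pol_mon. Qed.

Lemma pol_vec (R : nzRingType) n k (p : {mpoly R[n]}) :
  p \is k.-homog -> pol (vec k p) = p.
Proof.
move=> hp; apply/mpolyP => m.
have [hm|hm] := eqVneq (mdeg m) k.
  by have [t <-] := mon_surj hm; rewrite mcoeff_pol_mon mxE.
by rewrite mcoeff_pol_out // (dhomog_nemf_coeff hp hm).
Qed.

Lemma pol_homog (R : nzRingType) n k (v : 'rV[R]_(Msz n k)) : pol v \is k.-homog.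
Proof.
apply/rpred_sum => t _; apply/rpredZ.
by rewrite dhomogX /= mdeg_mon.
Qed.

Lemma polD (R : nzRingType) n k (u v : 'rV[R]_(Msz n k)) : pol (u + v) = pol u + pol v.
Proof. by rewrite /pol -big_split; apply: eq_bigr => t _; rewrite mxE scalerDl. Qed.

Lemma polZ (R : nzRingType) n k a (u : 'rV[R]_(Msz n k)) : pol (a *: u) = a *: pol u.
Proof. by rewrite /pol scaler_sumr; apply: eq_bigr => t _; rewrite mxE scalerA. Qed.

Lemma polN (R : nzRingType) n k (u : 'rV[R]_(Msz n k)) : pol (- u) = - pol u.
Proof. by rewrite -scaleN1r polZ scaleN1r. Qed.

Lemma polB (R : nzRingType) n k (u v : 'rV[R]_(Msz n k)) : pol (u - v) = pol u - pol v.
Proof. by rewrite polD polN. Qed.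

Lemma pol0 (R : nzRingType) n k : pol (0 : 'rV[R]_(Msz n k)) = 0.
Proof. by rewrite /pol big1 // => t _; rewrite mxE scale0r. Qed.

Lemma vecD (R : nzRingType) n k (p q : {mpoly R[n]}) : vec k (p + q) = vec k p + vec k q.
Proof. by apply/rowP => t; rewrite !mxE mcoeffD. Qed.

Lemma vecZ (R : nzRingType) n k a (p : {mpoly R[n]}) : vec k (a *: p) = a *: vec k p.
Proof. by apply/rowP => t; rewrite !mxE mcoeffZ. Qed.

Lemma vecB (R : nzRingType) n k (p q : {mpoly R[n]}) : vec k (p - q) = vec k p - vec k q.
Proof. by apply/rowP => t; rewrite !mxE mcoeffB. Qed.

Lemma vec0 (R : nzRingType) n k : vec k (0 : {mpoly R[n]}) = 0.
Proof. by apply/rowP => t; rewrite !mxE mcoeff0. Qed.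

Lemma vec_sum (R : nzRingType) n k (I : Type) (r : seq I) (F : I -> {mpoly R[n]}) :
  vec k (\sum_(i <- r) F i) = \sum_(i <- r) vec k (F i).
Proof.
elim: r => [|a r ih]; first by rewrite !big_nil vec0.
by rewrite !big_cons vecD ih.
Qed.

Lemma pol_map (R S : nzRingType) (f : {rmorphism R -> S}) n k (v : 'rV[R]_(Msz n k)) :
  pol (map_mx f v) = map_mpoly f (pol v).
Proof.
rewrite /pol raddf_sum; apply: eq_bigr => t _ /=.
by rewrite map_mpolyZ map_mpolyX mxE.
Qed.

Lemma vec_map (R S : nzRingType) (f : {rmorphism R -> S}) n k (p : {mpoly R[n]}) :
  vec k (map_mpoly f p) = map_mx f (vec k p).
Proof. by apply/rowP => t; rewrite !mxE mcoeff_map_mpoly. Qed.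

Definition subsp (F : fieldType) M (S : 'rV[F]_M -> Prop) : Prop :=
  S 0 /\ (forall a u v, S u -> S v -> S (a *: u + v)).

Lemma subsp_mul (F : fieldType) M (S : 'rV[F]_M -> Prop) p (A : 'M_(p, M)) u :
  subsp S -> (forall i, S (row i A)) -> S (u *m A).
Proof.
move=> [S0 SD] hA; rewrite mulmx_sum_row.
apply: (big_ind S) => //.
  by move=> x y hx hy; have := SD 1 x y hx hy; rewrite scale1r.
by move=> i _; have := SD (u 0 i) _ 0 (hA i) S0; rewrite addr0.
Qed.

Lemma subsp_sub (F : fieldType) M (S : 'rV[F]_M -> Prop) p (A : 'M_(p, M)) v :
  subsp S -> (forall i, S (row i A)) -> (v <= A)%MS -> S v.
Proof. by move=> hS hA /submxP [u ->]; apply: subsp_mul. Qed.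

Lemma subsp_exists (F : fieldType) M (S : 'rV[F]_M -> Prop) :
  subsp S -> exists E : 'M_M, forall v, (v <= E)%MS <-> S v.
Proof.
move=> hS; have [S0 SD] := hS.
pose P (E : 'M[F]_M) := forall w : 'rV_M, (w <= E)%MS -> S w.
have H : forall k, (exists E, P E /\ (k <= \rank E)%N) \/
                   (exists E, P E /\ forall v, S v -> (v <= E)%MS).
  elim=> [|k ih].
    left; exists 0; split=> // w; rewrite submx0 => /eqP ->; exact: S0.
  case: ih => [[E [PE hk]]|hr]; last by right.
  have [hall|hn] := classic (forall v, S v -> (v <= E)%MS).
    by right; exists E.
  have [v hv] := not_all_ex_not _ _ hn.
  have [Sv nv] := imply_to_and _ _ hv.
  left; exists (E + v)%MS; split.
    move=> w /sub_addsmxP [[u1 u2] /= ->].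
    have h1 : S (u1 *m E) by apply: PE; apply: submxMl.
    have h2 : S (u2 *m v) by apply: subsp_mul => // i; rewrite row_id.
    by have := SD 1 _ _ h1 h2; rewrite scale1r.
  have hlt : (E < E + v)%MS.
    rewrite ltmxE addsmxSl /=; apply/negP => hle; apply: nv.
    exact: submx_trans (addsmxSr E v) hle.
  move: hlt; rewrite ltmxErank => /andP [_ hr].
  exact: leq_ltn_trans hk hr.
have [[E [_ hk]]|[E [PE hE]]] := H M.+1.
  by have := rank_leq_col E; rewrite leqNgt hk.
by exists E => v; split; [apply: PE | apply: hE].
Qed.

Definition spanmx (F : fieldType) M (S : 'rV[F]_M -> Prop) : 'M[F]_M :=
  match excluded_middle_informative
          (exists E : 'M[F]_M, forall v, (v <= E)%MS <-> S v) with
  | left h => proj1_sig (constructive_indefinite_description _ h)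
  | right _ => 0
  end.

Lemma spanmxP (F : fieldType) M (S : 'rV[F]_M -> Prop) :
  subsp S -> forall v, (v <= spanmx S)%MS <-> S v.
Proof.
move=> hS; rewrite /spanmx; case: excluded_middle_informative => [h|h].
  by case: constructive_indefinite_description.
by case: h; apply: subsp_exists.
Qed.

Lemma eqmx_pred (F : fieldType) p q M (A : 'M[F]_(p, M)) (B : 'M[F]_(q, M))
  (P : 'rV[F]_M -> Prop) :
  (forall v, (v <= A)%MS <-> P v) -> (forall v, (v <= B)%MS <-> P v) ->
  \rank A = \rank B.
Proof.
move=> hA hB; apply/eqmx_rank/andP; split; apply/row_subP => i.
  by apply/hB/hA; apply: row_sub.
by apply/hA/hB; apply: row_sub.
Qed.

Lemma rank_ker_eq (F : fieldType) m p q (A : 'M[F]_(m, p)) (B : 'M[F]_(m, q)) :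
  (forall u : 'rV_m, u *m A = 0 <-> u *m B = 0) -> \rank A = \rank B.
Proof.
move=> h.
have := @eqmx_pred F _ _ _ (kermx A) (kermx B) (fun u => u *m A = 0).
rewrite !mxrank_ker => /(_ (fun v => iff_sym (rwP sub_kermxP))).
move=> /(_ (fun v => iff_trans (iff_sym (rwP sub_kermxP)) (iff_sym (h v)))).
have := rank_leq_row A; have := rank_leq_row B; lia.
Qed.

Lemma ideal_scale (F : comNzRingType) n (I : {mpoly F[n]} -> Prop) a p :
  is_ideal I -> I p -> I (a *: p).
Proof. by move=> [_ _ hM] hp; rewrite -mul_mpolyC; apply: hM. Qed.

Lemma ideal_sub (F : comNzRingType) n (I : {mpoly F[n]} -> Prop) p q :
  is_ideal I -> I p -> I q -> I (p - q).
Proof.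
move=> hI hp hq; have [_ hD _] := hI; apply: hD => //.
by rewrite -scaleN1r; apply: ideal_scale.
Qed.

Definition Imx (F : fieldType) n (I : {mpoly F[n]} -> Prop) k : 'M[F]_(Msz n k) :=
  spanmx (fun v : 'rV[F]_(Msz n k) => I (pol v)).

Lemma Imx_subsp (F : fieldType) n (I : {mpoly F[n]} -> Prop) k :
  is_ideal I -> subsp (fun v : 'rV[F]_(Msz n k) => I (pol v)).
Proof.
move=> hI; have [h0 hD hM] := hI; split; first by rewrite pol0.
by move=> a u v hu hv; rewrite polD polZ; apply: hD => //; apply: ideal_scale.
Qed.

Lemma ImxP (F : fieldType) n (I : {mpoly F[n]} -> Prop) k (v : 'rV[F]_(Msz n k)) :
  is_ideal I -> (v <= Imx I k)%MS <-> I (pol v).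
Proof. by move=> hI; apply: (spanmxP (@Imx_subsp F n I k hI)). Qed.

Definition Mul (R : nzRingType) n i k (g : {mpoly R[n]}) : 'M[R]_(Msz n i, Msz n k) :=
  \matrix_(s, t) (g * 'X_[mon s])@_(mon t).

Lemma Mul_vec (R : comNzRingType) n i k (g : {mpoly R[n]}) u :
  u *m Mul i k g = vec k (g * pol u).
Proof.
apply/rowP => t; rewrite !mxE /pol mulr_sumr raddf_sum /=.
by apply: eq_bigr => s _; rewrite !mxE -scalerAr mcoeffZ.
Qed.

Lemma map_Mul (R S : nzRingType) (f : {rmorphism R -> S}) n i k (g : {mpoly R[n]}) :
  map_mx f (Mul i k g) = Mul i k (map_mpoly f g).
Proof.
apply/matrixP => s t; rewrite !mxE -mcoeff_map_mpoly rmorphM /=.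
by rewrite map_mpolyX.
Qed.

Definition Xm (F : fieldType) n (I : {mpoly F[n]} -> Prop) i k (g : {mpoly F[n]}) :=
  Mul i k g *m cokermx (Imx I k).

Lemma homM (R : nzRingType) n i e k (g p : {mpoly R[n]}) :
  g \is e.-homog -> k = (i + e)%N -> p \is i.-homog -> g * p \is k.-homog.
Proof. by move=> hg -> hp; rewrite addnC; apply: dhomogM. Qed.

Lemma Xm_ker (F : fieldType) n (I : {mpoly F[n]} -> Prop) i e k g u :
  is_ideal I -> g \is e.-homog -> k = (i + e)%N ->
  u *m Xm I i k g = 0 <-> I (g * pol u).
Proof.
move=> hI hg hk; rewrite /Xm mulmxA Mul_vec.
have hh : g * pol u \is k.-homog by apply: homM hk (pol_homog _).
split=> [h|h].
  by rewrite -(pol_vec hh); apply/(ImxP _ hI); rewrite submxE h.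
by apply/eqP; rewrite -submxE; apply/(ImxP _ hI); rewrite pol_vec.
Qed.

Lemma Imx_ker (F : fieldType) n (I : {mpoly F[n]} -> Prop) i e k g :
  is_ideal I -> g \is e.-homog -> k = (i + e)%N ->
  (Imx I i <= kermx (Xm I i k g))%MS.
Proof.
move=> hI hg hk; apply/row_subP => j; apply/sub_kermxP.
apply/(Xm_ker _ hI hg hk); have [_ _ hM] := hI; apply: hM.
by apply/(ImxP _ hI); apply: row_sub.
Qed.

Lemma rk_le_src (F : fieldType) n (I : {mpoly F[n]} -> Prop) i e k g :
  is_ideal I -> g \is e.-homog -> k = (i + e)%N ->
  (\rank (Xm I i k g) <= Msz n i - \rank (Imx I i))%N.
Proof.
move=> hI hg hk; have := mxrankS (Imx_ker hI hg hk).
rewrite mxrank_ker; have := rank_leq_row (Xm I i k g); lia.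
Qed.

Lemma rk_le_tgt (F : fieldType) n (I : {mpoly F[n]} -> Prop) i k g :
  (\rank (Xm I i k g) <= Msz n k - \rank (Imx I k))%N.
Proof. by rewrite -mxrank_coker; apply: mxrankM_maxr. Qed.

Lemma rk_inj (F : fieldType) n (I : {mpoly F[n]} -> Prop) i e k g :
  is_ideal I -> g \is e.-homog -> k = (i + e)%N ->
  (Msz n i - \rank (Imx I i) <= \rank (Xm I i k g))%N ->
  forall p, p \is i.-homog -> I (g * p) -> I p.
Proof.
move=> hI hg hk hr p hp hgp.
have hsub := Imx_ker hI hg hk.
have [_ e'] := mxrank_leqif_sup hsub.
have hker : (kermx (Xm I i k g) <= Imx I i)%MS.
  rewrite -e'; apply/eqP; have := mxrankS hsub; rewrite !mxrank_ker.
  have := rank_leq_row (Xm I i k g); lia.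
rewrite -(pol_vec hp); apply/(ImxP _ hI); apply: submx_trans hker.
by apply/sub_kermxP/(Xm_ker _ hI hg hk); rewrite pol_vec.
Qed.

Lemma rk_surj (F : fieldType) n (I : {mpoly F[n]} -> Prop) i e k g :
  is_ideal I -> g \is e.-homog -> k = (i + e)%N ->
  (Msz n k - \rank (Imx I k) <= \rank (Xm I i k g))%N ->
  forall g', g' \is k.-homog -> exists p, p \is i.-homog /\ I (g' - g * p).
Proof.
move=> hI hg hk hr g' hg'.
have hsub : (Xm I i k g <= cokermx (Imx I k))%MS by apply: submxMl.
have [_ e'] := mxrank_leqif_sup hsub.
have hco : (cokermx (Imx I k) <= Xm I i k g)%MS.
  rewrite -e'; apply/eqP; have := mxrankS hsub; rewrite !mxrank_coker; lia.
have : (vec k g' *m cokermx (Imx I k) <= Xm I i k g)%MS.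
  exact: submx_trans (submxMl _ _) hco.
case/submxP => u hu; exists (pol u); split; first exact: pol_homog.
have hh : g * pol u \is k.-homog by apply: homM hk (pol_homog _).
rewrite -(pol_vec hg') -(pol_vec hh) -polB; apply/(ImxP _ hI).
by rewrite submxE mulmxBl hu /Xm mulmxA Mul_vec subrr.
Qed.

Lemma rk_inj_conv (F : fieldType) n (I : {mpoly F[n]} -> Prop) i e k g :
  is_ideal I -> g \is e.-homog -> k = (i + e)%N ->
  (forall p, p \is i.-homog -> I (g * p) -> I p) ->
  (Msz n i - \rank (Imx I i) <= \rank (Xm I i k g))%N.
Proof.
move=> hI hg hk h.
have hker : (kermx (Xm I i k g) <= Imx I i)%MS.
  apply/row_subP => j; apply/(ImxP _ hI); apply: h; first exact: pol_homog.
  by apply/(Xm_ker _ hI hg hk); apply/sub_kermxP; apply: row_sub.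
have := mxrankS hker; rewrite mxrank_ker; have := rank_leq_row (Xm I i k g); lia.
Qed.

Lemma rk_surj_conv (F : fieldType) n (I : {mpoly F[n]} -> Prop) i e k g :
  is_ideal I -> g \is e.-homog -> k = (i + e)%N ->
  (forall g', g' \is k.-homog -> exists p, p \is i.-homog /\ I (g' - g * p)) ->
  (Msz n k - \rank (Imx I k) <= \rank (Xm I i k g))%N.
Proof.
move=> hI hg hk h.
have hco : (cokermx (Imx I k) <= Xm I i k g)%MS.
  apply/row_subP => j; rewrite rowE.
  set w := 'e_j.
  have [p [hp hI']] := h (pol w) (pol_homog _).
  have hh : g * p \is k.-homog by apply: homM hk hp.
  have e1 : w *m cokermx (Imx I k) = vec k (g * p) *m cokermx (Imx I k).
    apply/eqP; rewrite -subr_eq0 -mulmxBl -submxE; apply/(ImxP _ hI).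
    by rewrite polB pol_vec.
  rewrite e1 -(pol_vec hp) -Mul_vec -mulmxA; apply: submxMl.
by have := mxrankS hco; rewrite mxrank_coker.
Qed.

Lemma colon_ideal (F : comNzRingType) n (I : {mpoly F[n]} -> Prop) (G : {mpoly F[n]}) :
  is_ideal I -> is_ideal (colon I G).
Proof.
move=> [h0 hD hM]; split; rewrite /colon.
- by rewrite mul0r.
- by move=> p q hp hq; rewrite mulrDl; apply: hD.
- by move=> r p hp; rewrite -mulrA; apply: hM.
Qed.

Lemma Xm_colon (F : fieldType) n (I : {mpoly F[n]} -> Prop) (G g : {mpoly F[n]})
  i e k D k' :
  is_ideal I -> g \is e.-homog -> k = (i + e)%N -> G \is D.-homog -> k' = (k + D)%N ->
  \rank (Xm (colon I G) i k g) = \rank (Xm I i k' (g * G)).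
Proof.
move=> hI hg hk hG hk'; apply: rank_ker_eq => u.
have hC := colon_ideal G hI.
have hgG : g * G \is (e + D).-homog by apply: dhomogM.
rewrite (Xm_ker _ hC hg hk) (Xm_ker _ hI hgG (_ : k' = i + (e + D))%N); last by lia.
by rewrite /colon mulrAC.
Qed.

Lemma Imx_colon (F : fieldType) n (I : {mpoly F[n]} -> Prop) (G : {mpoly F[n]}) i D k :
  is_ideal I -> G \is D.-homog -> k = (i + D)%N ->
  \rank (Imx (colon I G) i) = (Msz n i - \rank (Xm I i k G))%N.
Proof.
move=> hI hG hk; rewrite -mxrank_ker.
apply: (@eqmx_pred _ _ _ _ _ _ (fun v => colon I G (pol v))).
  by move=> v; apply: ImxP; apply: colon_ideal.
move=> v; rewrite /colon mulrC; split.
  by move/sub_kermxP/(Xm_ker _ hI hG hk).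
by move=> h; apply/sub_kermxP/(Xm_ker _ hI hG hk).
Qed.

Lemma vec_pihomog (R : nzRingType) n k (p : {mpoly R[n]}) :
  vec k (pihomog mdeg k p) = vec k p.
Proof.
apply/rowP => t; rewrite !mxE pihomogE raddf_sum /= big_mkcond /=.
rewrite [in RHS](mpolyE p) raddf_sum /=; apply: eq_bigr => m _.
case: ifP => // hmk; rewrite mcoeffZ mcoeffX; case: eqP => [h|]; last by rewrite mulr0.
by move: hmk; rewrite h mdeg_mon eqxx.
Qed.

Lemma pihomogXM (R : comNzRingType) n k (m : 'X_{1..n}) (q : {mpoly R[n]}) :
  pihomog mdeg k ('X_[m] * q) =
  if (mdeg m <= k)%N then 'X_[m] * pihomog mdeg (k - mdeg m) q else 0.
Proof.
rewrite [in LHS](mpolyE q) [in RHS](mpolyE q) mulr_sumr raddf_sum /=.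
case: ifP => hm.
  rewrite raddf_sum /= mulr_sumr; apply: eq_bigr => mu _.
  rewrite -scalerAr !linearZ /= -scalerAr -mpolyXD !pihomogX.
  rewrite mfD /=.
  case: eqP => h1; case: eqP => h2; rewrite ?mulr0 ?mpolyXD //; lia.
rewrite big1 // => mu _; rewrite -scalerAr linearZ /= -mpolyXD pihomogX mfD /=.
case: eqP => h1; rewrite ?scaler0 //; lia.
Qed.

Lemma ext_is_ideal (K' K : fieldType) (f : {rmorphism K' -> K}) n (J : {mpoly K'[n]} -> Prop) :
  is_ideal (ext_ideal f J).
Proof.
split.
- by exists [::]; rewrite big_nil.
- move=> p q [s [hs ->]] [t [ht ->]]; exists (s ++ t); split; last by rewrite big_cat.
  by move=> x; rewrite mem_cat => /orP [/hs|/ht].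
- move=> r p [s [hs ->]]; exists [seq (r * x.1, x.2) | x <- s]; split.
    by move=> x /mapP [y /hs hy ->].
  by rewrite big_map mulr_sumr; apply: eq_bigr => x _; rewrite mulrA.
Qed.

Lemma ext_map (K' K : fieldType) (f : {rmorphism K' -> K}) n (J : {mpoly K'[n]} -> Prop) q :
  J q -> ext_ideal f J (map_mpoly f q).
Proof.
move=> hq; exists [:: (1, q)]; split; first by move=> x; rewrite inE => /eqP ->.
by rewrite big_seq1 mul1r.
Qed.

Lemma piece_zero_ext (K' K : fieldType) (f : {rmorphism K' -> K}) n (J : {mpoly K'[n]} -> Prop) k :
  piece_zero J k -> piece_zero (ext_ideal f J) k.
Proof.
move=> hz p hp; rewrite (mpolyE p) big_seq.
have hI := ext_is_ideal f J; have [h0 hD hM] := hI.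
apply: (big_ind (ext_ideal f J)) => // m hm.
apply: ideal_scale => //; rewrite -(map_mpolyX f).
apply: ext_map; apply: hz; rewrite dhomogX.
by have := dhomog_mf hp hm => /= ->.
Qed.

Lemma BC (K' K : fieldType) (f : {rmorphism K' -> K}) n (J : {mpoly K'[n]} -> Prop) k
  (v : 'rV[K]_(Msz n k)) :
  is_ideal J -> is_graded J ->
  ext_ideal f J (pol v) <-> (v <= map_mx f (Imx J k))%MS.
Proof.
move=> hJ hg; have hE := ext_is_ideal f J; split; last first.
  move=> hv; apply: (subsp_sub (Imx_subsp k hE) _ hv) => j.
  rewrite -map_row pol_map; apply: ext_map; apply/(ImxP _ hJ); exact: row_sub.
move=> [s [hs hp]]; rewrite -(vec_pol v) hp vec_sum big_seq.
apply: (big_ind (fun w => (w <= map_mx f (Imx J k))%MS)).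
- exact: sub0mx.
- by move=> a b ha hb; apply: addmx_sub.
move=> [r q] /hs /= hq.
rewrite [r]mpolyE mulr_suml vec_sum.
apply: (big_ind (fun w => (w <= map_mx f (Imx J k))%MS)).
- exact: sub0mx.
- by move=> a b ha hb; apply: addmx_sub.
move=> m _; rewrite -scalerAl vecZ; apply: scalemx_sub.
rewrite -(map_mpolyX f) -rmorphM vec_map; rewrite map_submx.
rewrite -vec_pihomog pihomogXM; case: ifP => hm; last by rewrite vec0 sub0mx.
have hh : 'X_[m] * pihomog mdeg (k - mdeg m) q \is k.-homog.
  rewrite -{2}(subnKC hm); apply: dhomogM; first by rewrite dhomogX.
  exact: pihomogP.
apply/(ImxP _ hJ).
have [_ _ hM] := hJ; have h := hM 'X_[m] _ (hg _ (k - mdeg m)%N hq).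
apply: (eq_ind _ J h); symmetry; exact: (pol_vec hh).
Qed.

(* rank under generic specialization *)

Lemma pid_factor (F : fieldType) p q (A : 'M[F]_(p, q)) :
  exists (P0 : 'M_(\rank A, p)) (Q0 : 'M_(q, \rank A)), P0 *m A *m Q0 = 1%:M.
Proof.
set r := \rank A.
exists (pid_mx r *m invmx (col_ebase A)), (invmx (row_ebase A) *m pid_mx r).
have hrp : (r <= p)%N := rank_leq_row A.
have hrq : (r <= q)%N := rank_leq_col A.
rewrite -{2}(mulmx_ebase A) !mulmxA -(mulmxA (pid_mx r)) mulVmx ?col_ebase_unit //.
rewrite mulmx1 -(mulmxA _ (row_ebase A)) mulmxV ?row_ebase_unit // mulmx1.
rewrite !mul_pid_mx minnn (minn_idPr hrp) minnn (minn_idPr hrq) pid_mx_1 //.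
Qed.

Lemma map_mx_cancel (R S : Type) (c : R -> S) (g : S -> R) p q (A : 'M[R]_(p, q)) :
  (forall a, g (c a) = a) -> map_mx g (map_mx c A) = A.
Proof. by move=> h; apply/matrixP => i j; rewrite !mxE h. Qed.

Lemma map_mx_comp2 (R S T : Type) (c : R -> S) (g : S -> T) (f : R -> T) p q (A : 'M[R]_(p, q)) :
  (forall a, g (c a) = f a) -> map_mx g (map_mx c A) = map_mx f A.
Proof. by move=> h; apply/matrixP => i j; rewrite !mxE h. Qed.

Lemma rank_generic (S : comNzRingType) (F1 F2 : fieldType)
  (phi : {rmorphism S -> F1}) (psi : {rmorphism S -> F2})
  (c : {rmorphism F2 -> S}) (f : {rmorphism F2 -> F1}) :
  (forall a, psi (c a) = a) -> (forall a, phi (c a) = f a) ->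
  (forall P, phi P = 0 -> P = 0) ->
  forall p q (M : 'M[S]_(p, q)), (\rank (map_mx psi M) <= \rank (map_mx phi M))%N.
Proof.
move=> hpc hfc hinj p q M.
have [P0 [Q0 hPQ]] := pid_factor (map_mx psi M).
set r := \rank (map_mx psi M) in P0 Q0 hPQ *.
set D := \det (map_mx c P0 *m M *m map_mx c Q0).
have hpD : psi D = 1.
  by rewrite /D -det_map_mx !map_mxM !map_mx_cancel // hPQ det1.
have hD : phi D != 0.
  apply/eqP => /hinj hD0; move: hpD; rewrite hD0 rmorph0 => /eqP.
  by rewrite eq_sym oner_eq0.
move: hD; rewrite /D -det_map_mx !map_mxM !(map_mx_comp2 _ hfc).
set B := (_ *m _ *m _) => hB.
have hu : B \in unitmx by rewrite unitmxE unitfE.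
have := mxrank_unit hu => hr.
rewrite -[X in (X <= _)%N]hr.
apply: leq_trans (mxrankM_maxl _ _) _; exact: mxrankM_maxr.
Qed.

Lemma mnm1_inj n (i j : 'I_n) : (U_(i)%MM == U_(j)%MM) = (i == j).
Proof.
apply/eqP/eqP => [h|->] //.
have := congr1 (fun m : 'X_{1..n} => m i) h; rewrite !mnm1E eqxx. by case: eqP.
Qed.

Lemma lin1 (R : nzRingType) n (l : {mpoly R[n]}) :
  l \is 1.-homog -> l = \sum_(j < n) l@_U_(j) *: 'X_j.
Proof.
move=> hl; apply/mpolyP => m; rewrite raddf_sum /=.
have [hm|hm] := eqVneq (mdeg m) 1%N.
  move/eqP: hm => /mdeg1P [j0 /eqP ->].
  rewrite (bigD1 j0) //= mcoeffZ mcoeffX eqxx mulr1 big1 ?addr0 // => j hj.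
  by rewrite mcoeffZ mcoeffX mnm1_inj (negbTE hj) mulr0.
rewrite (dhomog_nemf_coeff hl hm) big1 // => j _.
rewrite mcoeffZ mcoeffX; case: eqP => [h|]; last by rewrite mulr0.
by move: hm; rewrite -h mdeg1 eqxx.
Qed.

Lemma lin_form_homog (K : fieldType) m n (xi : 'M[K]_(m, n)) i :
  lin_form xi i \is 1.-homog.
Proof.
apply/rpred_sum => j _; apply/rpredZ.
by rewrite dhomogX /= mdeg1.
Qed.

Lemma prod_homog (K : fieldType) m n (xi : 'M[K]_(m, n)) (d : 'I_m -> nat) :
  \prod_(i < m) lin_form xi i ^+ d i \is (\sum_(i < m) d i).-homog.
Proof.
apply: (big_ind2 (fun (x : {mpoly K[n]}) (y : nat) => x \is y.-homog)).
- exact: dhomog1.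
- by move=> x1 x2 y1 y2 h1 h2; apply: dhomogM.
- by move=> i _; have := dhomogMn (d i) (lin_form_homog xi i); rewrite mul1n.
Qed.

Lemma map_homog (K' K : fieldType) (f : {rmorphism K' -> K}) n k (p : {mpoly K'[n]}) :
  p \is k.-homog -> map_mpoly f p \is k.-homog.
Proof.
move=> /dhomogP hp; apply/dhomogP => m.
rewrite (perm_mem (msupp_map_mpoly _ (fmorph_inj f))); exact: hp.
Qed.

Lemma key (K' K : fieldType) (f : {rmorphism K' -> K}) n m (J : {mpoly K'[n]} -> Prop)
  (xi : 'M[K]_(m, n)) (d : 'I_m -> nat) (l : {mpoly K'[n]}) e i k :
  is_ideal J -> is_graded J -> alg_indep f xi -> l \is 1.-homog ->
  (\rank (Xm J i k (l ^+ (e + \sum_(i0 < m) d i0))) <=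
   \rank (Xm (ext_ideal f J) i k
           (map_mpoly f l ^+ e * \prod_(i0 < m) lin_form xi i0 ^+ d i0)))%N.
Proof.
move=> hJ hg hind hl.
pose S := {mpoly K'[m * n]}.
pose c : {rmorphism K' -> S} := @mpolyC (m * n) K'.
pose v := fun kk => mxvec xi 0 kk.
pose phi : {rmorphism S -> K} := meval v \o map_mpoly f.
pose ev := fun kk => mxvec (\matrix_(i0 < m, j < n) l@_U_(j)) 0 kk.
pose psi : {rmorphism S -> K'} := meval ev.
pose linY i0 : {mpoly S[n]} := \sum_(j < n) ('X_(mxvec_index i0 j) : S) *: 'X_j.
pose GY := map_mpoly c l ^+ e * \prod_(i0 < m) linY i0 ^+ d i0.
pose M := Mul i k GY *m map_mx c (cokermx (Imx J k)).
have hpc : forall a, psi (c a) = a by move=> a; rewrite /= mevalC.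
have hfc : forall a, phi (c a) = f a by move=> a; rewrite /= map_mpolyC mevalC.
have hinj : forall P, phi P = 0 -> P = 0 by move=> P; apply: hind.
have := rank_generic hpc hfc hinj M.
have E1 : map_mx psi M = Xm J i k (l ^+ (e + \sum_(i0 < m) d i0)).
  rewrite /M map_mxM map_Mul map_mx_cancel // /Xm; congr (Mul _ _ _ *m _).
  rewrite /GY rmorphM rmorphXn rmorph_prod /=.
  have -> : map_mpoly psi (map_mpoly c l) = l.
    apply/mpolyP => mm; rewrite !mcoeff_map_mpoly. exact: hpc.
  rewrite (eq_bigr (fun i0 => l ^+ d i0)) ?prodrXr ?exprD // => i0 _.
  rewrite rmorphXn /linY raddf_sum /= [in RHS](lin1 hl); congr (_ ^+ _).
  apply: eq_bigr => j _; rewrite map_mpolyZ map_mpolyX /= mevalXU /ev mxvecE mxE //.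
have E2 : map_mx phi M = Mul i k (map_mpoly f l ^+ e *
             \prod_(i0 < m) lin_form xi i0 ^+ d i0) *m map_mx f (cokermx (Imx J k)).
  rewrite /M map_mxM map_Mul (map_mx_comp2 _ hfc); congr (Mul _ _ _ *m _).
  rewrite /GY rmorphM rmorphXn rmorph_prod /=.
  have -> : map_mpoly phi (map_mpoly c l) = map_mpoly f l.
    by apply/mpolyP => mm; rewrite !mcoeff_map_mpoly; exact: hfc.
  congr (_ * _); apply: eq_bigr => i0 _.
  rewrite rmorphXn /linY raddf_sum /=; congr (_ ^+ _).
  apply: eq_bigr => j _; rewrite map_mpolyZ map_mpolyX /= map_mpolyX mevalXU /v mxvecE //.
rewrite E1 E2 => h; apply: leq_trans h _; rewrite map_cokermx.
rewrite /Xm; apply/eq_leq; apply: rank_ker_eq => u.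
have hE := ext_is_ideal f J.
rewrite !(mulmxA u); split => /eqP.
  rewrite -submxE => /(BC f _ hJ hg) /(ImxP _ hE); rewrite submxE => /eqP //.
rewrite -submxE => /(ImxP _ hE) /(BC f _ hJ hg); rewrite submxE => /eqP //.
Qed.

Lemma Imx_ext_rank (K' K : fieldType) (f : {rmorphism K' -> K}) n (J : {mpoly K'[n]} -> Prop) k :
  is_ideal J -> is_graded J -> \rank (Imx (ext_ideal f J) k) = \rank (Imx J k).
Proof.
move=> hJ hg; rewrite -(mxrank_map f (Imx J k)).
apply: (@eqmx_pred _ _ _ _ _ _ (fun v => (v <= map_mx f (Imx J k))%MS)) => v.
  by rewrite (ImxP _ (ext_is_ideal f J)); apply: BC.
by [].
Qed.

Definition cb (P : Prop) : bool := if excluded_middle_informative P then true else false.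

Lemma cbP (P : Prop) : reflect P (cb P).
Proof. by rewrite /cb; case: excluded_middle_informative => h; constructor. Qed.

Lemma homX (R : nzRingType) n (z : {mpoly R[n]}) e : z \is 1.-homog -> z ^+ e \is e.-homog.
Proof. by move=> hz; have := dhomogMn e hz; rewrite mul1n. Qed.

Theorem lemma4p5 (K' K : fieldType) (f : {rmorphism K' -> K}) (n m : nat)
  (J : {mpoly K'[n]} -> Prop) (xi : 'M[K]_(m, n)) (d : 'I_m -> nat) :
  [pchar K] =i pred0 ->
  is_ideal J -> is_graded J -> has_SLP J ->
  alg_indep f xi ->
  (forall i, (0 < d i)%N) ->
  has_SLP (colon (ext_ideal f J) (\prod_(i < m) lin_form xi i ^+ d i)).
Proof.
move=> _ hJ hgr [[N hN] [l [hl hSLP]]] hind _.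
set F := \prod_(i < m) lin_form xi i ^+ d i.
set D := \sum_(i < m) d i.
have hJR := ext_is_ideal f J.
have hF : F \is D.-homog := prod_homog xi d.
have hC := colon_ideal F hJR.
have pzC : forall k, piece_zero J (k + D) -> piece_zero (colon (ext_ideal f J) F) k.
  move=> k hz p hp; rewrite /colon; apply: (piece_zero_ext f hz); exact: dhomogM.
split.
  by exists N => k hk; apply: pzC; apply: hN; lia.
exists (map_mpoly f l); split; first exact: map_homog.
move=> c e i hc hc1 he1 he hi.
have hnz : ~ piece_zero J (c + D) by move=> h; apply: hc; apply: pzC.
have hcN : (c + D < N)%N.
  by rewrite ltnNge; apply/negP => h; apply: hnz; exact: hN.
pose P := fun k => (k < N)%N && cb (~ piece_zero J k).
have exP : exists k, P k by exists (c + D)%N; rewrite /P hcN; apply/cbP.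
have ubP : forall k, P k -> (k <= N)%N by move=> k /andP [/ltnW].
case: (ex_maxnP exP ubP) => c' /andP [hc'N /cbP hc'] maxc'.
have hz' : piece_zero J c'.+1.
  case: (ltnP c'.+1 N) => hlt; last exact: hN.
  apply: NNPP => hn; have := maxc' c'.+1; rewrite /P hlt /=.
  by move=> /(_ (introT (cbP _) hn)); rewrite ltnn.
have hcc : (c + D <= c')%N by apply: maxc'; rewrite /P hcN; apply/cbP.
have hfr := hSLP c' (e + D)%N i hc' hz' (_ : (1 <= e + D)%N) (_ : (e + D <= c' - 1)%N)
   (_ : (i <= c' - (e + D))%N).
have {hfr} hfr : mult_full_rank J l (e + D) i by apply: hfr; lia.
set z := map_mpoly f l.
have hz1 : z \is 1.-homog by exact: map_homog.
have hze : z ^+ e \is e.-homog by apply: homX.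
have hle : l ^+ (e + D) \is (e + D).-homog by apply: homX.
set k := (i + (e + D))%N.
have hkey := @key K' K f n m J xi d l e i k hJ hgr hind hl.
rewrite -/D -/F -/z in hkey.
have hcol := @Xm_colon K n (ext_ideal f J) F (z ^+ e) i e (i + e)%N D k hJR hze
  (erefl _) hF (_ : k = (i + e + D))%N.
have {hcol} hcol : \rank (Xm (colon (ext_ideal f J) F) i (i + e) (z ^+ e)) =
   \rank (Xm (ext_ideal f J) i k (z ^+ e * F)) by apply: hcol; rewrite /k; lia.
have hICi := @Imx_colon K n (ext_ideal f J) F i D (i + D)%N hJR hF (erefl _).
have hICie := @Imx_colon K n (ext_ideal f J) F (i + e)%N D k hJR hF (_ : k = (i + e + D))%N.
have {hICie} hICie : \rank (Imx (colon (ext_ideal f J) F) (i + e)) =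
    (Msz n (i + e) - \rank (Xm (ext_ideal f J) (i + e) k F))%N.
  by apply: hICie; rewrite /k; lia.
have hb1 := @rk_le_src K n (ext_ideal f J) i D (i + D)%N F hJR hF (erefl _).
have hb2 := @rk_le_tgt K n (ext_ideal f J) (i + e)%N k F.
have hr1 := rank_leq_row (Xm (ext_ideal f J) i (i + D) F).
have hr2 := rank_leq_row (Xm (ext_ideal f J) (i + e) k F).
rewrite !(Imx_ext_rank f _ hJ hgr) in hb1 hb2.
case: hfr => h.
  have hi0 := @rk_inj_conv K' n J i (e + D)%N k (l ^+ (e + D)) hJ hle (erefl _) h.
  left; apply: (@rk_inj K n _ i e (i + e)%N (z ^+ e) hC hze (erefl _)).
  rewrite hcol hICi; lia.
have hs0 := @rk_surj_conv K' n J i (e + D)%N k (l ^+ (e + D)) hJ hle (erefl _) h.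
right; apply: (@rk_surj K n _ i e (i + e)%N (z ^+ e) hC hze (erefl _)).
rewrite hcol hICie; lia.
Qed.
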